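(* The category of cubes $\widehat{\square}$ of all adjacency-preserving maps is the unique shell-complete category of cubes.
   Context: $[0]=\{()\}$, $[n]=\{0,1\}^n$ ($n\ge1$) with the product order; ${\rm PoSet}$ is the category of posets with strictly increasing maps. Face maps $\delta_i^\alpha:[n-1]\to[n]$ insert $\alpha\in\{0,1\}$ at position $i$; $\square$ is the subcategory of ${\rm PoSet}$ with objects $[n]$, $n\ge0$, generated by the face maps. With $d(\epsilon,\epsilon')=\sum_i|\epsilon_i-\epsilon'_i|$, a map $f:[m]\to[n]$ is adjacency-preserving if strictly increasing and $d(x,y)=1\Rightarrow d(f(x),f(y))=1$. A category of cubes is a subcategory $\mathcal A\subset{\rm PoSet}$ with objects $\{[n]:n\ge0\}$, containing $\square$, whose morphisms are all adjacency-preserving; $\widehat\square$ consists of all adjacency-preserving maps. An $\mathcal A$-set is a presheaf on $\mathcal A$; $\mathcal A[p]=\mathcal A(-,[p])$; $K_{\le1}$ denotes truncation to dimensions $\le 1$ (a presheaf on the full subcategory on $[0],[1]$). $\mathrm{cosk}_1^{\mathcal A}$ is the right adjoint of the truncation functor $K\mapsto K_{\le1}$ from $\mathcal A$-sets to $1$-dimensional $\mathcal A$-sets. $\mathcal A$ is shell-complete if for every $p\ge2$ the canonical map $\mathcal A[p]\to\mathrm{cosk}_1^{\mathcal A}(\mathcal A[p]_{\le1})$ (adjoint to the identity of $\mathcal A[p]_{\le1}$) is an isomorphism. *)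

(* Defs.v *)
From mathcomp Require Import all_boot.
Set Implicit Arguments. Unset Strict Implicit. Unset Printing Implicit Defensive.

(* The poset [n] = {0,1}^n; [0] is the one-point poset (unique function 'I_0 -> bool). *)
Definition cube (n : nat) : finType := {ffun 'I_n -> bool}.

(* maps [m] -> [n] (as finite functions, so equality is extensional) *)
Definition hom (m n : nat) : finType := {ffun cube m -> cube n}.

Definition comp (l m n : nat) (g : hom m n) (f : hom l m) : hom l n :=
  [ffun x => g (f x)].

Definition idh (n : nat) : hom n n := [ffun x => x].

Definition face (n : nat) (i : 'I_n.+1) (a : bool) : hom n n.+1 :=
  [ffun x : cube n => [ffun j : 'I_n.+1 =>
      if unlift i j is Some k then x k else a]].

Inductive boxmap : forall m n : nat, hom m n -> Prop :=
| box_id n : @boxmap n n (idh n)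
| box_face n i a : @boxmap n n.+1 (face i a)
| box_comp l m n (g : hom m n) (f : hom l m) :
    boxmap g -> boxmap f -> boxmap (comp g f).

Definition cube_le n (x y : cube n) : bool := [forall i, x i <= y i].
Definition cube_lt n (x y : cube n) : bool := cube_le x y && (x != y).

Definition strictly_increasing m n (f : hom m n) : Prop :=
  forall x y, cube_lt x y -> cube_lt (f x) (f y).

Definition cdist n (x y : cube n) : nat := \sum_(i < n) (x i != y i).

Definition adj_preserving m n (f : hom m n) : Prop :=
  strictly_increasing f /\
  forall x y, cdist x y = 1 -> cdist (f x) (f y) = 1.

Definition homset := forall m n : nat, hom m n -> Prop.

Definition is_cat_of_cubes (A : homset) : Prop :=
  [/\ (forall n, A n n (idh n)),
      (forall l m n (g : hom m n) (f : hom l m),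
          A m n g -> A l m f -> A l n (comp g f)),
      (forall m n (f : hom m n), boxmap f -> A m n f) &
      (forall m n (f : hom m n), A m n f -> adj_preserving f)].

Definition hatbox : homset := fun m n (f : hom m n) => adj_preserving f.
Arguments hatbox : clear implicits.

(* natural transformations  A[n]_{<=1} -> A[p]_{<=1}  of presheaves on the
   full subcategory of A on [0],[1]; only the values on A-maps matter *)
Definition trunc_nat (A : homset) (n p : nat)
    (phi : forall k, hom k n -> hom k p) : Prop :=
  (forall k (g : hom k n), k <= 1 -> A k n g -> A k p (phi k g)) /\
  (forall k l (h : hom k l) (g : hom l n), k <= 1 -> l <= 1 ->
      A k l h -> A l n g -> phi k (comp g h) = comp (phi l g) h).

(* cosk_1(A[p]_{<=1})_n = Nat(A[n]_{<=1}, A[p]_{<=1}); the canonical map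
   A[p] -> cosk_1(A[p]_{<=1}) sends f : [n] -> [p] to (g |-> f o g).
   Shell-completeness: for p >= 2 it is bijective at every level n. *)
Definition shell_complete (A : homset) : Prop :=
  forall p, 2 <= p -> forall n,
    (forall f f' : hom n p, A n p f -> A n p f' ->
       (forall k (g : hom k n), k <= 1 -> A k n g -> comp f g = comp f' g) ->
       f = f') /\
    (forall phi : forall k, hom k n -> hom k p, trunc_nat A phi ->
       exists2 f : hom n p, A n p f &
         forall k (g : hom k n), k <= 1 -> A k n g -> phi k g = comp f g).

(* Main.v *)
Require Import Defs.
From mathcomp Require Import all_boot.
Set Implicit Arguments. Unset Strict Implicit.
Local Notation comp := Defs.comp.

Definition pt n (x : cube n) : hom 0 n := [ffun _ => x].
Definition p0 : cube 0 := [ffun i => false].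
Definition e0 : cube 1 := [ffun _ => false].
Definition e1 : cube 1 := [ffun _ => true].
Definition edge n (x y : cube n) : hom 1 n := [ffun z : cube 1 => if z ord0 then y else x].
Definition restr k n (j : 'I_n.+1) (g : hom k n.+1) : hom k n :=
  [ffun x => [ffun l => g x (lift j l)]].

Lemma compE l m n (g : hom m n) (f : hom l m) x : comp g f x = g (f x).
Proof. by rewrite /comp /pt /edge /e0 /e1 ?ffunE. Qed.
Lemma ptE n (x : cube n) z : pt x z = x.
Proof. by rewrite /comp /pt /edge /e0 /e1 ?ffunE. Qed.
Lemma edgeE n (x y : cube n) z : edge x y z = if z ord0 then y else x.
Proof. by rewrite /comp /pt /edge /e0 /e1 ?ffunE. Qed.
Lemma e0E i : e0 i = false. Proof. by rewrite /comp /pt /edge /e0 /e1 ?ffunE. Qed.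
Lemma e1E i : e1 i = true. Proof. by rewrite /comp /pt /edge /e0 /e1 ?ffunE. Qed.
Lemma faceE n (i : 'I_n.+1) a x j :
  face i a x j = if unlift i j is Some k then x k else a.
Proof. by rewrite /face !ffunE. Qed.
Lemma restrE k n (j : 'I_n.+1) (g : hom k n.+1) x l : restr j g x l = g x (lift j l).
Proof. by rewrite /restr !ffunE. Qed.

Lemma cube0_eq (a b : cube 0) : a = b.
Proof. by apply/ffunP => -[]. Qed.

Lemma cube1_cases (z : cube 1) : z = e0 \/ z = e1.
Proof.
case h: (z ord0); [right|left]; apply/ffunP => i;
  by rewrite (ord1 i) h ?e0E ?e1E.
Qed.

Lemma homP m n (f g : hom m n) : (forall x, f x = g x) -> f = g.
Proof. move=> H. change ((f : {ffun cube m -> cube n}) = g). by apply/ffunP. Qed.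

Lemma comp_pt m n (g : hom m n) z : comp g (pt z) = pt (g z).
Proof. by apply: homP => x; rewrite compE !ptE. Qed.

Lemma cube_le_trans n (x y z : cube n) : cube_le x y -> cube_le y z -> cube_le x z.
Proof.
move=> /forallP H1 /forallP H2; apply/forallP => i.
exact: leq_trans (H1 i) (H2 i).
Qed.

Lemma cube_le_anti n (x y : cube n) : cube_le x y -> cube_le y x -> x = y.
Proof.
move=> /forallP H1 /forallP H2; apply/ffunP => i.
by move: (H1 i) (H2 i); case: (x i); case: (y i).
Qed.

Lemma cube_lt_trans n (x y z : cube n) : cube_lt x y -> cube_lt y z -> cube_lt x z.
Proof.
move=> /andP [l1 n1] /andP [l2 n2]; apply/andP; split.
  exact: cube_le_trans l1 l2.
apply/eqP => E; move: l2; rewrite -E => l2.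
by move: n1; rewrite (cube_le_anti l1 l2) eqxx.
Qed.

Lemma lt1 (a b : cube 1) : cube_lt a b -> a ord0 = false /\ b ord0 = true.
Proof.
move=> /andP [/forallP H N]; move: (H ord0) => Hle.
have Hne : a ord0 != b ord0.
  apply/negP => /eqP E; move: N; have -> : a = b by apply/ffunP => i; rewrite (ord1 i) E.
  by rewrite eqxx.
by move: Hle Hne; case: (a ord0); case: (b ord0).
Qed.

Lemma lt0 (a b : cube 0) : ~~ cube_lt a b.
Proof. by rewrite /cube_lt (cube0_eq a b) eqxx andbF. Qed.

Lemma cdist_sym n (x y : cube n) : cdist x y = cdist y x.
Proof. by apply: eq_bigr => i _; rewrite eq_sym. Qed.

Lemma cdist1E (a b : cube 1) : cdist a b = (a ord0 != b ord0).
Proof. by rewrite /cdist big_ord1. Qed.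

Lemma lt_e01 : cube_lt e0 e1.
Proof.
apply/andP; split; first by apply/forallP => i; rewrite e0E e1E.
by apply/eqP => /ffunP /(_ ord0); rewrite e0E e1E.
Qed.

Lemma cdist_e01 : cdist e0 e1 = 1.
Proof. by rewrite cdist1E e0E e1E. Qed.

Lemma adj0 n (g : hom 0 n) : adj_preserving g.
Proof.
split; first by move=> x y; rewrite (cube0_eq x y) /cube_lt eqxx andbF.
by move=> x y; rewrite /cdist big_ord0.
Qed.

Lemma adj1 n (g : hom 1 n) : adj_preserving g ->
  cube_lt (g e0) (g e1) /\ cdist (g e0) (g e1) = 1.
Proof. by move=> [H1 H2]; split; [apply: H1 lt_e01 | apply: H2 cdist_e01]. Qed.

Lemma cdist0 n (x y : cube n) : cdist x y = 0 -> x = y.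
Proof.
move=> /eqP; rewrite /cdist sum_nat_eq0 => /forallP H.
apply/ffunP => i; move: (H i) => /=.
by case: (x i); case: (y i).
Qed.

Lemma cdist1 n (x y : cube n) : cdist x y = 1 ->
  exists i, x i != y i /\ forall j, j != i -> x j = y j.
Proof.
move=> Hd.
case: (pickP (fun i => x i != y i)) => [i Hi | H]; last first.
  by move: Hd; rewrite /cdist big1 // => i _; rewrite H.
exists i; split => //.
move: Hd; rewrite /cdist (bigD1 i) //= Hi add1n => -[] /eqP.
rewrite sum_nat_eq0 => /forallP H j Hj; move: (H j); rewrite Hj /=.
by case: (x j); case: (y j).
Qed.

Lemma cdist1_lt n (x y : cube n) : cdist x y = 1 -> cube_lt x y \/ cube_lt y x.
Proof.
move=> /cdist1 [i [Hi Ho]].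
have NE : forall (a b : cube n), a i != b i -> a != b.
  by move=> a b H; apply/eqP => E; move: H; rewrite E eqxx.
case hx: (x i); [right|left]; apply/andP; split.
- apply/forallP => j; case: (eqVneq j i) => [->|/Ho ->] //.
  by rewrite hx; case: (y i).
- by apply: NE; rewrite eq_sym.
- apply/forallP => j; case: (eqVneq j i) => [->|/Ho ->] //.
  by rewrite hx.
- exact: NE.
Qed.

Lemma face_inj n (i : 'I_n.+1) a (x y : cube n) : face i a x = face i a y -> x = y.
Proof.
move=> E; apply/ffunP => k; have := congr1 (fun v : cube n.+1 => v (lift i k)) E.
by rewrite /= !faceE liftK.
Qed.

Lemma face_le n (i : 'I_n.+1) a (x y : cube n) :
  cube_le (face i a x) (face i a y) = cube_le x y.
Proof.
apply/forallP/forallP => H k.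
  by move: (H (lift i k)); rewrite !faceE liftK.
by rewrite !faceE; case: unliftP.
Qed.

Lemma face_lt n (i : 'I_n.+1) a (x y : cube n) :
  cube_lt (face i a x) (face i a y) = cube_lt x y.
Proof.
by rewrite /cube_lt face_le (inj_eq (@face_inj n i a)).
Qed.

Lemma face_cdist n (i : 'I_n.+1) a (x y : cube n) :
  cdist (face i a x) (face i a y) = cdist x y.
Proof.
rewrite /cdist (bigD1_ord i) //= !faceE unlift_none eqxx add0n.
by apply: eq_bigr => k _; rewrite !faceE liftK.
Qed.

Lemma face_adj n (i : 'I_n.+1) a : adj_preserving (face i a).
Proof.
split => x y; first by rewrite face_lt.
by rewrite face_cdist.
Qed.

Lemma adj_comp l m n (g : hom m n) (f : hom l m) :
  adj_preserving g -> adj_preserving f -> adj_preserving (comp g f).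
Proof.
move=> [g1 g2] [f1 f2]; split => x y H; rewrite !compE; [exact/g1/f1 | exact/g2/f2].
Qed.

Lemma adj_id n : adj_preserving (idh n).
Proof. by split => x y; rewrite /idh !ffunE. Qed.

Lemma box_adj m n (f : hom m n) : boxmap f -> adj_preserving f.
Proof.
elim => {m n f} [n|n i a|l m n g f _ Hg _ Hf]; [exact: adj_id|exact: face_adj|].
exact: adj_comp.
Qed.

Lemma decomp k n (g : hom k n.+1) (j : 'I_n.+1) c :
  (forall x, g x j = c) -> g = comp (face j c) (restr j g).
Proof.
move=> Hc; apply: homP => x; apply/ffunP => l.
rewrite compE faceE; case: unliftP => [k' ->|->]; by rewrite ?restrE ?Hc.
Qed.

Lemma pt_box n (g : hom 0 n) : boxmap g.
Proof.
elim: n g => [|n IH] g.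
  have -> : g = idh 0 by apply: homP => x; apply: cube0_eq.
  exact: box_id.
rewrite (@decomp 0 n g ord0 (g p0 ord0)); last by move=> x; rewrite (cube0_eq x p0).
apply: box_comp; [exact: box_face | exact: IH].
Qed.

Lemma edge_box n (g : hom 1 n) :
  cube_lt (g e0) (g e1) -> cdist (g e0) (g e1) = 1 -> boxmap g.
Proof.
elim: n g => [|n IH] g Hlt Hd.
  by move: (lt0 (g e0) (g e1)); rewrite Hlt.
case: (pickP (fun j => g e0 j == g e1 j)) => [j /eqP Hj | H].
  have Hc : forall x, g x j = g e0 j.
    by move=> x; case: (cube1_cases x) => ->.
  have E := decomp Hc.
  rewrite E; apply: box_comp; first exact: box_face.
  have Hx : forall x, g x = face j (g e0 j) (restr j g x).
    by move=> x; rewrite {1}E compE.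
  apply: IH.
    by move: Hlt; rewrite (Hx e0) (Hx e1) face_lt.
  by move: Hd; rewrite (Hx e0) (Hx e1) face_cdist.
have Hn : n = 0.
  move: Hd; rewrite /cdist (eq_bigr (fun _ => 1)); last by move=> i _; rewrite H.
  by rewrite sum_nat_const card_ord muln1 => -[].
subst n.
have [h0 h1] := lt1 Hlt.
have -> : g = idh 1.
  apply: homP => x; rewrite /idh ffunE; apply/ffunP => i; rewrite (ord1 i).
  by case: (cube1_cases x) => ->; rewrite ?e0E ?e1E.
exact: box_id.
Qed.

Lemma edge_adj n (x y : cube n) : cube_lt x y -> cdist x y = 1 -> adj_preserving (edge x y).
Proof.
move=> Hlt Hd; split => z z'.
  by move=> /lt1 [h h']; rewrite !edgeE h h'.
rewrite cdist1E !edgeE.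
case: (z ord0); case: (z' ord0) => H1.
- by [].
- by rewrite cdist_sym.
- by [].
- by [].
Qed.
Lemma si_of_edges m p (F : cube m -> cube p) :
  (forall x y, cube_lt x y -> cdist x y = 1 -> cube_lt (F x) (F y)) ->
  forall x y, cube_lt x y -> cube_lt (F x) (F y).
Proof.
move=> H x y; move Hd: (cdist x y) => d; elim: d x Hd => [|d IH] x Hd Hlt.
  by move: Hlt; rewrite (cdist0 Hd) /cube_lt eqxx andbF.
move: (Hlt) => /andP [/forallP Hle Hne].
case: (pickP (fun i => x i != y i)) => [i Hi | Hall]; last first.
  have Exy : x = y.
    apply/ffunP => i; move: (Hall i) => /negbFE /eqP; done.
  by move: Hne; rewrite Exy eqxx.
have hx : x i = false by move: (Hle i) Hi; case: (x i); case: (y i).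
have hy : y i = true by move: (Hle i) Hi; case: (x i); case: (y i).
pose x' : cube m := [ffun j => if j == i then true else x j].
have x'E : forall j, x' j = if j == i then true else x j by move=> j; rewrite ffunE.
have Hxx' : cube_lt x x'.
  apply/andP; split.
    by apply/forallP => j; rewrite x'E; case: (j == i) => //; case: (x j).
  by apply/eqP => /ffunP /(_ i); rewrite x'E eqxx hx.
have Hd1 : cdist x x' = 1.
  rewrite /cdist (bigD1 i) //= x'E eqxx hx /= big1 // => j Hj.
  by rewrite x'E (negbTE Hj) eqxx.
have Hd' : cdist x' y = d.
  have A1 : cdist x y = 1 + \sum_(j < m | j != i) (x j != y j).
    by rewrite /cdist (bigD1 i) //= hx hy.
  have A2 : cdist x' y = \sum_(j < m | j != i) (x j != y j).
    rewrite /cdist (bigD1 i) //= x'E eqxx hy /= add0n.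
    by apply: eq_bigr => j Hj; rewrite x'E (negbTE Hj).
  by move: Hd; rewrite A1 A2 add1n => -[].
case: d IH Hd Hd' => [|d] IH Hd Hd'.
  by move: Hlt; rewrite -(cdist0 Hd') => _; apply: H.
apply: cube_lt_trans (H _ _ Hxx' Hd1) _.
apply (IH x' Hd').
apply/andP; split.
  apply/forallP => j; rewrite x'E; case: eqP => [->|_]; by rewrite ?hy ?Hle.
by apply/eqP => E; move: Hd'; rewrite E /cdist big1 // => j _; rewrite eqxx.
Qed.

Lemma low_box k n (g : hom k n) : k <= 1 -> adj_preserving g -> boxmap g.
Proof.
case: k g => [|[|k]] g // _ Hg; first exact: pt_box.
by have [H1 H2] := adj1 Hg; apply: edge_box.
Qed.

Lemma hat_cat : is_cat_of_cubes hatbox.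
Proof.
split.
- move=> n; exact: adj_id.
- move=> l m n g f; exact: adj_comp.
- move=> m n f; exact: box_adj.
- by [].
Qed.

Lemma hat_shell : shell_complete hatbox.
Proof.
move=> p _ n; split.
  move=> f f' _ _ H; apply: homP => x.
  have := H 0 (pt x) isT (adj0 _).
  by move=> /(congr1 (fun h : hom 0 p => h p0)); rewrite !compE ptE.
move=> phi [Hphi1 Hphi2].
pose f : hom n p := [ffun x => phi 0 (pt x) p0].
have fE : forall x, f x = phi 0 (pt x) p0 by move=> x; rewrite ffunE.
have Hval : forall k (g : hom k n), k <= 1 -> hatbox k n g -> phi k g = comp f g.
  move=> k g Hk Hg; apply: homP => z.
  have := Hphi2 0 k (pt z) g isT Hk (adj0 _) Hg.
  move=> /(congr1 (fun h : hom 0 p => h p0)).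
  by rewrite comp_pt !compE ptE fE => ->.
clearbody f.
have Hedge : forall x y, cube_lt x y -> cdist x y = 1 ->
    cube_lt (f x) (f y) /\ cdist (f x) (f y) = 1.
  move=> x y Hlt Hd.
  have He := edge_adj Hlt Hd.
  have := Hphi1 1 (edge x y) isT He.
  rewrite (Hval 1 _ isT He) => Ha.
  have [A1 A2] := adj1 Ha.
  by move: A1 A2; rewrite !compE !edgeE e0E e1E.
exists f.
  split; first by apply: si_of_edges => x y Hlt Hd; case: (Hedge x y Hlt Hd).
  move=> x y Hd; case: (cdist1_lt Hd) => Hlt.
    by case: (Hedge x y Hlt Hd).
  by rewrite cdist_sym in Hd; case: (Hedge y x Hlt Hd) => _; rewrite cdist_sym.
move=> k g Hk Hg; exact: Hval.
Qed.

Lemma no_chain m n (f : hom m.+2 n) : n <= 1 -> ~ adj_preserving f.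
Proof.
move=> Hn [Hs _].
pose x : cube m.+2 := [ffun _ => false].
pose y : cube m.+2 := [ffun j => val j == 0].
pose z : cube m.+2 := [ffun j => val j <= 1].
have Hxy : cube_lt x y.
  apply/andP; split; first by apply/forallP => j; rewrite !ffunE.
  by apply/eqP => /ffunP /(_ ord0); rewrite !ffunE.
have Hyz : cube_lt y z.
  apply/andP; split.
    by apply/forallP => j; rewrite !ffunE; case: (val j) => [|[|]].
  by apply/eqP => /ffunP /(_ (lift ord0 ord0)); rewrite !ffunE.
have L1 := Hs _ _ Hxy; have L2 := Hs _ _ Hyz.
case: n f Hn Hs L1 L2 => [|[|n]] f Hn Hs L1 L2 //.
  by move: (lt0 (f x) (f y)); rewrite L1.
by have [_ A] := lt1 L1; have [B _] := lt1 L2; rewrite A in B.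
Qed.

Theorem theorem7p15 :
  [/\ is_cat_of_cubes hatbox,
      shell_complete hatbox &
      forall A : homset, is_cat_of_cubes A -> shell_complete A ->
        forall m n (f : hom m n), A m n f <-> hatbox m n f].
Proof.
split; [exact: hat_cat | exact: hat_shell |].
move=> A [Aid Acomp Abox Aadj] Ash m n f; split; first exact: Aadj.
move=> Hf.
have Alow : forall k q (g : hom k q), k <= 1 -> adj_preserving g -> A k q g.
  by move=> k q g Hk Hg; apply: Abox; apply: low_box.
case: (leqP 2 n) => Hn.
  have [_ Hfull] := Ash n Hn m.
  have Hnat : trunc_nat A (fun k (g : hom k m) => comp f g).
    split.
      by move=> k g Hk Hg; apply: Alow => //; apply: adj_comp => //; apply: Aadj.
    by move=> k l h g _ _ _ _; apply: homP => x; rewrite !compE.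
  have [f' Hf' Heq] := Hfull _ Hnat.
  have -> : f = f' => //.
  apply: homP => x.
  have := Heq 0 (pt x) isT (Alow 0 m (pt x) isT (adj0 _)).
  by move=> /(congr1 (fun h : hom 0 n => h p0)); rewrite !compE ptE.
case: m f Hf => [|[|m]] f Hf; try by apply: Alow.
by exfalso; apply: (no_chain (f := f)) => //; rewrite -ltnS.
Qed.
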